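(* Let $\Omega\subset\mathbb{R}^n$ be open, $\omega\in A_\infty$, and let $p:\Omega\to[1,\infty]$ be measurable such that $\frac1p$ satisfies the log-Hölder decay condition with limit exponent $p_\infty\in[1,\infty]$. Then there exists $\lambda\in(0,1)$ such that \[\int_\Omega\lambda^{1/\left|\frac1{p(x)}-\frac1{p_\infty}\right|}\,\omega(x)\,dx<\infty.\]
   Context: Convention $1/\infty:=0$ (and $\lambda^{1/0}:=0$ for $\lambda\in(0,1)$). $\frac1p$ satisfies the log-Hölder decay condition with $p_\infty$ if there is $c_2>0$ with $\big|\frac1{p(x)}-\frac1{p_\infty}\big|\le\frac{c_2}{\log(e+|x|)}$ for all $x\in\Omega$. A weight is a nonnegative locally integrable function $\omega$ on $\mathbb{R}^n$, $\omega(E):=\int_E\omega\,dx$. For $1<q<\infty$, $\omega\in A_q$ means $\sup_B|B|^{-q}\omega(B)\big(\int_B\omega^{-q'/q}dx\big)^{q-1}<\infty$ with $1/q+1/q'=1$, supremum over open balls; $\omega\in A_1$ means $M\omega\le C\omega$ a.e. ($M$ the Hardy–Littlewood maximal operator); $A_\infty:=\bigcup_{q\in[1,\infty)}A_q$. *)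

(* Defs.v *)
From HB Require Import structures.
From mathcomp Require Import all_boot all_order all_algebra.
From mathcomp Require Import all_classical all_reals all_analysis.
From mathcomp Require Import measurable_realfun.
Set Implicit Arguments. Unset Strict Implicit. Unset Printing Implicit Defensive.
Import Order.TTheory GRing.Theory Num.Theory.
Local Open Scope classical_set_scope.
Local Open Scope ring_scope.

Section product_sigma_finite.
(* The generic sigma-finite instance of the library for [m1 \x m2] is shadowed
   by a later canonical declaration, so we re-declare it on a wrapper. *)
Local Open Scope ereal_scope.
Context (d1 d2 : measure_display) (T1 : measurableType d1)
  (T2 : measurableType d2) (R : realType).
Variables (m1 : {sigma_finite_measure set T1 -> \bar R})
  (m2 : {sigma_finite_measure set T2 -> \bar R}).

Definition pmeas : set (T1 * T2) -> \bar R := (m1 \x m2)%E.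
HB.instance Definition _ := Measure.on pmeas.

Lemma pmeas_sigma_finite : sigma_finite setT pmeas.
Proof.
have /sigma_finiteP[F [TF ndF Foo]] := sigma_finiteT m1.
have /sigma_finiteP[G [TG ndG Goo]] := sigma_finiteT m2.
exists (fun n => F n `*` G n).
 rewrite -setXTT TF TG predeqE => -[x y]; split.
    move=> [/= [n _ Fnx] [k _ Gky]]; exists (maxn n k) => //; split.
    - by move: x Fnx; exact/subsetPset/ndF/leq_maxl.
    - by move: y Gky; exact/subsetPset/ndG/leq_maxr.
  by move=> [n _ []/= ? ?]; split; exists n.
move=> k; have [? ?] := Foo k; have [? ?] := Goo k.
split; first exact: measurableX.
by rewrite /pmeas product_measure1E// lte_mul_pinfty// ge0_fin_numE.
Qed.

HB.instance Definition _ := Measure_isSigmaFinite.Build _ _ _ pmeas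
  pmeas_sigma_finite.
End product_sigma_finite.

Record mspace (R : realType) := MSpace {
  ms_disp : measure_display;
  ms_T :> measurableType ms_disp;
  ms_mu : {sigma_finite_measure set ms_T -> \bar R} }.

Definition Rn0 (R : realType) : mspace R :=
  @MSpace R _ unit (SigmaFiniteMeasure.clone _ _ _ (\d_tt)%R _).

Definition RnS (R : realType) (M : mspace R) : mspace R :=
  @MSpace R _ (measurableTypeR R * ms_T M)%type
   (pmeas lebesgue_measure (ms_mu M)).

Fixpoint Rn (R : realType) (n : nat) : mspace R :=
  match n with 0 => Rn0 R | m.+1 => RnS (Rn R m) end.

Definition pt (R : realType) n := ms_T (Rn R n).
Definition leb (R : realType) n : set (pt R n) -> \bar R := ms_mu (Rn R n).

Fixpoint sqnorm (R : realType) (n : nat) : pt R n -> R :=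
  match n return pt R n -> R with
  | 0 => fun _ => 0
  | m.+1 => fun x => x.1 ^+ 2 + sqnorm x.2
  end.

Fixpoint vsub (R : realType) (n : nat) : pt R n -> pt R n -> pt R n :=
  match n return pt R n -> pt R n -> pt R n with
  | 0 => fun x _ => x
  | m.+1 => fun x y => (x.1 - y.1, vsub x.2 y.2)
  end.

Section Euclid.
Variables (R : realType) (n : nat).
Local Open Scope ereal_scope.

Definition enorm (x : pt R n) : R := Num.sqrt (sqnorm x).
Definition edist (x y : pt R n) : R := enorm (vsub x y).
Definition eball (c : pt R n) (r : R) : set (pt R n) := [set y | (edist c y < r)%R].
Definition eopen (O : set (pt R n)) : Prop :=
  forall x, O x -> exists2 r : R, (0 < r)%R & eball x r `<=` O.

Definition wmeas (w : pt R n -> R) (E : set (pt R n)) : \bar R :=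
  \int[@leb R n]_(x in E) (w x)%:E.

Definition weight (w : pt R n -> R) : Prop :=
  (forall x, (0 <= w x)%R) /\ measurable_fun setT w /\
  (forall c r, wmeas w (eball c r) < +oo).

Definition wneg (q : R) (w : pt R n -> R) (x : pt R n) : \bar R :=
  let q' := (q / (q - 1))%R in
  if w x == 0%R then +oo else ((w x) `^ (- (q' / q)))%:E.

Definition Aq (q : R) (w : pt R n -> R) : Prop :=
  weight w /\
  exists C : R, forall (c : pt R n) (r : R), (0 < r)%R ->
    poweR (@leb R n (eball c r)) (- q) * wmeas w (eball c r) *
    poweR (\int[@leb R n]_(x in eball c r) wneg q w x) (q - 1) <= C%:E.

Definition maxfun (w : pt R n -> R) (x : pt R n) : \bar R :=
  ereal_sup [set y | exists c r, (0 < r)%R /\ eball c r x /\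
     y = (fine (@leb R n (eball c r)))^-1%:E * wmeas w (eball c r)].

Definition A1 (w : pt R n -> R) : Prop :=
  weight w /\
  exists C : R, {ae @leb R n, forall x, maxfun w x <= C%:E * (w x)%:E}.

Definition Ainf (w : pt R n -> R) : Prop :=
  A1 w \/ exists q : R, (1 < q)%R /\ Aq q w.

(** 1/p with the convention 1/oo := 0 *)
Definition inv_ext (x : \bar R) : R :=
  match x with r%:E => r^-1 | _ => 0%R end.

Definition log_holder_decay (O : set (pt R n)) (p : pt R n -> \bar R)
    (pinf : \bar R) : Prop :=
  exists2 c2 : R, (0 < c2)%R & forall x, O x ->
    (`|inv_ext (p x) - inv_ext pinf| <= c2 / ln (expR 1 + enorm x))%R.

End Euclid.

(** lambda^{1/t}, with lambda^{1/0} := 0 *)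
Definition lampow (R : realType) (lam t : R) : R :=
  if t == 0 then 0 else lam `^ t^-1.

(* Main.v *)
Require Import Defs.
From HB Require Import structures.
From mathcomp Require Import all_boot all_order all_algebra.
From mathcomp Require Import all_classical all_reals all_analysis.
From mathcomp Require Import measurable_realfun.
Import Order.TTheory GRing.Theory Num.Theory.
Local Open Scope classical_set_scope.
Local Open Scope ring_scope.
From mathcomp Require Import lra ring.
Fixpoint zp (R : realType) (n : nat) : pt R n :=
  match n return pt R n with 0 => tt | m.+1 => (0%R, zp R m) end.
Section S.
Variable R : realType.
Lemma msqnorm n : measurable_fun setT (@sqnorm R n).
Proof.
elim: n => [|n IH] /=; first exact: measurable_cst.
apply: measurable_funD.
  by apply: measurable_funX; exact: measurable_fst.
exact: measurableT_comp IH measurable_snd.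
Qed.
Lemma sqnorm_ge0 n (x : pt R n) : 0 <= sqnorm x.
Proof.
elim: n x => [|n IH] x /=; first by [].
by rewrite addr_ge0 ?sqr_ge0.
Qed.
Lemma sqnorm_vsubz n (y : pt R n) : sqnorm (vsub (zp R n) y) = sqnorm y.
Proof.
elim: n y => [|n IH] y //=.
by rewrite IH sub0r sqrrN.
Qed.
Definition B n r := eball (zp R n) r.
Lemma BE n r : 0 < r -> B n r = [set y | sqnorm y < r ^+ 2].
Proof.
move=> r0; rewrite /B /eball /Defs.edist /Defs.enorm; apply/seteqP; split => y /=;
  rewrite sqnorm_vsubz.
  by rewrite -{1}(ger0_norm (ltW r0)) -sqrtr_sqr ltr_sqrt // exprn_gt0.
by rewrite -{2}(ger0_norm (ltW r0)) -sqrtr_sqr ltr_sqrt // exprn_gt0.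
Qed.
Lemma Bnorm n r (y : pt R n) : B n r y = (Defs.enorm y < r).
Proof. by rewrite /B /eball /Defs.edist /Defs.enorm /= sqnorm_vsubz. Qed.
Lemma mB n r : 0 < r -> measurable (B n r).
Proof.
move=> r0; rewrite BE //.
rewrite (_ : [set y | sqnorm y < r ^+ 2] = setT `&` (@sqnorm R n) @^-1` `]-oo, r ^+ 2[).
  exact: (@msqnorm n measurableT _ (measurable_itv `]-oo, r ^+ 2[)).
by rewrite setTI; apply/seteqP; split => y /=; rewrite in_itv /= ?andbT.
Qed.
Lemma B_sub n r : 0 < r -> B n.+1 r `<=` `]-r, r[ `*` B n r.
Proof.
move=> r0; rewrite !BE // => -[a y] /= h; split => /=.
  have := sqnorm_ge0 _ y; rewrite in_itv /= !expr2 in h * => ?.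
  by apply/andP; split; nra.
by have := sqnorm_ge0 _ y; have := sqr_ge0 a; lra.
Qed.
Lemma B_sup n r : 0 < r -> `]-(r/2), r/2[ `*` B n (r/2) `<=` B n.+1 r.
Proof.
move=> r0; rewrite !BE ?divr_gt0 // => -[a y] /= [/=]; rewrite in_itv /= -ltr_norml.
move=> ha hy.
have h2 : a ^+ 2 < (r/2) ^+ 2.
  by rewrite -real_normK ?num_real// ltrXn2r // ?normr_ge0 // ltW // divr_gt0.
have : (r/2)^+2 + (r/2)^+2 < r^+2.
  by rewrite !expr2; have := mulr_gt0 r0 r0; lra.
lra.
Qed.
Local Open Scope ereal_scope.
Lemma leb_B_ub n r : (0 < r)%R -> @leb R n (B n r) <= ((2*r)^+n)%:E.
Proof.
elim: n r => [|n IH] r r0.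
  rewrite /leb /= diracE expr0 lee_fin.
  by case: (tt \in _); rewrite /= ?lexx ?ler01.
have m1 : measurable (B n.+1 r) := @mB n.+1 r r0.
have m2 : measurable (`](- r)%R, r[ `*` B n r) :=
  @measurableX _ _ (measurableTypeR R) (Rn R n) _ _ (measurable_itv _) (@mB n r r0).
have E : ms_mu (Rn R n.+1) (`](- r)%R, r[ `*` B n r) =
    lebesgue_measure (`](- r)%R, r[ : set R) * @leb R n (B n r) :=
  @product_measure1E _ _ _ _ R lebesgue_measure (@leb R n) _ _ (measurable_itv _) (@mB n r r0).
have E' := eq_ind (ms_mu (Rn R n.+1) (`](- r)%R, r[ `*` B n r)) (fun z => ms_mu (Rn R n.+1) (`](- r)%R, r[ `*` B n r) <= z) (lexx _) _ E.
apply: le_trans (le_measure _ (mem_set m1) (mem_set m2) (@B_sub n r r0)) _.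
apply: le_trans E' _.
rewrite lebesgue_measure_itv /= ifT; last by rewrite lte_fin; lra.
rewrite exprS EFinM; apply: lee_pmul => //.
- by rewrite -EFinD lee_fin; lra.
- by rewrite -EFinD lee_fin; lra.
- exact: IH.
Qed.
Lemma leb_B_gt0 n r : (0 < r)%R -> 0 < @leb R n (B n r).
Proof.
elim: n r => [|n IH] r r0.
  rewrite /leb /= diracE lte_fin mem_set ?ltr01 //.
  by rewrite BE //= exprn_gt0.
have r20 : (0 < r / 2)%R by rewrite divr_gt0.
have m1 : measurable (B n.+1 r) := @mB n.+1 r r0.
have m2 : measurable (`](- (r/2))%R, (r/2)%R[ `*` B n (r/2)%R) :=
  @measurableX _ _ (measurableTypeR R) (Rn R n) _ _ (measurable_itv _) (@mB n _ r20).
have E : ms_mu (Rn R n.+1) (`](- (r/2))%R, (r/2)%R[ `*` B n (r/2)%R) =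
    lebesgue_measure (`](- (r/2))%R, (r/2)%R[ : set R) * @leb R n (B n (r/2)%R) :=
  @product_measure1E _ _ _ _ R lebesgue_measure (@leb R n) _ _ (measurable_itv _) (@mB n _ r20).
have E' := eq_ind _ (fun z => z <= ms_mu (Rn R n.+1) (`](- (r/2))%R, (r/2)%R[ `*` B n (r/2)%R)) (lexx _) _ E.
have L := le_measure (@leb R n.+1) (mem_set m2) (mem_set m1) (@B_sup n r r0).
apply: lt_le_trans L. apply: lt_le_trans E'.
rewrite lebesgue_measure_itv /= ifT; last by rewrite lte_fin; lra.
apply: mule_gt0; last exact: IH.
by rewrite -EFinD lte_fin; lra.
Qed.
End S.
Arguments B {R}. Arguments mB {R}. Arguments BE {R}. Arguments Bnorm {R}.
Arguments B_sub {R}. Arguments B_sup {R}. Arguments leb_B_ub {R}.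
Arguments leb_B_gt0 {R}. Arguments sqnorm_ge0 {R}. Arguments msqnorm {R}.
Arguments sqnorm_vsubz {R}.

Section T.
Variable R : realType.
Local Open Scope ereal_scope.
Lemma my_le_integral d (T : measurableType d) (mu : {measure set T -> \bar R}) (f g : T -> \bar R) :
  (forall x, 0 <= f x) -> (forall x, f x <= g x) ->
  \int[mu]_(x in setT) f x <= \int[mu]_(x in setT) g x.
Proof.
move=> f0 fg.
rewrite !ge0_integralTE//; last by move=> x; exact: le_trans (f0 x) (fg x).
apply: ereal_sup_le => _ [h hf <-]; exists h => //= x; exact: le_trans (hf x) (fg x).
Qed.

Lemma geo_bound (a z : R) : (0 <= a)%R -> (0 < z < 1)%R ->
  \sum_(k <oo) (a * z ^+ k)%:E < +oo.
Proof.
move=> a0 /andP[z0 z1].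
apply: (@le_lt_trans _ _ (a * (1 - z)^-1)%:E); last exact: ltry.
apply: lime_le.
  by apply: is_cvg_nneseries => k _ _; rewrite lee_fin mulr_ge0 // exprn_ge0 // ltW.
apply: nearW => m.
rewrite sumEFin lee_fin.
have z1' : (`|z| < 1)%R by rewrite ger0_norm // ltW.
have := @geometric_le_lim R m a z a0 z0 z1'.
by apply: le_trans; rewrite /series /=.
Qed.
Lemma expo_eq (K : R) (M k : nat) :
  (expR (- (M.+1%:R * k%:R)) * (K * expR k.+1%:R ^+ M) = (K * expR M%:R) * expR (-1) ^+ k)%R.
Proof.
rewrite -!expRM_natr mulrCA -mulrA -!expRD; congr (_ * expR _)%R.
rewrite -!natr1; ring.
Qed.
Lemma tail_bound n (w : pt R n -> R) (K : R) (M : nat) :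
  (forall x, 0 <= w x)%R -> measurable_fun setT w -> (0 <= K)%R ->
  (forall r : R, (1 <= r)%R -> wmeas w (B n r) <= (K * r ^+ M)%:E) ->
  forall (D : set (pt R n)) (F : pt R n -> R), (forall x, D x -> 0 <= F x)%R ->
  (forall x, D x -> exists k : nat,
      (F x <= expR (- (M.+1%:R * k%:R)) * w x)%R /\ B n (expR k.+1%:R) x) ->
  \int[@leb R n]_(x in D) (F x)%:E < +oo.
Proof.
move=> w0 mw K0 gr D F F0 HF.
pose g := fun (k : nat) x => (expR (- (M.+1%:R * k%:R)) * (\1_(B n (expR k.+1%:R)) x * w x))%:E.
have g0 k x : 0 <= g k x.
  by rewrite lee_fin mulr_ge0 ?expR_ge0 // mulr_ge0 // indicE; case: (_ \in _).
have mg k : measurable_fun setT (g k).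
  apply/measurable_EFinP; apply: measurable_funM; first exact: measurable_cst.
  apply: measurable_funM => //; apply: measurable_indic.
  exact: (mB _ _ (expR_gt0 _)).
rewrite integral_mkcond.
apply: (@le_lt_trans _ _ (\int[@leb R n]_(x in setT) \sum_(k <oo) g k x)).
  apply: my_le_integral.
    by move=> x; rewrite /patch; case: ifPn => // /set_mem Dx; rewrite lee_fin F0.
  move=> x; rewrite /patch; case: ifPn => [/set_mem Dx|_]; last first.
    by apply: nneseries_ge0 => k _ _.
  have [k [Fk Bk]] := HF x Dx.
  apply: (@le_trans _ _ (\sum_(0 <= i < k.+1) g i x)); last first.
    by apply: nneseries_lim_ge => i _ _.
  rewrite big_nat_recr //=; apply: lee_paddl; first by apply: sume_ge0 => i _.
  by rewrite /g lee_fin indicE mem_set // mul1r.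
rewrite integral_nneseries //.
have zz : (0 < expR (-1 : R) < 1)%R.
  by apply/andP; split; [exact: expR_gt0 | rewrite expR_lt1 ltrN10].

have G := @geo_bound _ _ (mulr_ge0 K0 (expR_ge0 M%:R)) zz.
apply: le_lt_trans G.
apply: lee_nneseries => [k _ _|k _]; first by apply: integral_ge0 => x _.
have -> : \int[@leb R n]_(x in setT) g k x =
    (expR (- (M.+1%:R * k%:R)))%:E * wmeas w (B n (expR k.+1%:R)).
  have mBk := mB n _ (expR_gt0 k.+1%:R).
  rewrite /wmeas -ge0_integralZl_EFin //; last first.
    by apply/measurable_EFinP; exact: measurable_funTS.
    by move=> x _; rewrite lee_fin.
  rewrite [RHS]integral_mkcond; apply: eq_integral => x _.
  rewrite /g /patch indicE; case: ifPn => _ /=; by rewrite ?mul1r ?mul0r ?mulr0 ?EFinM.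
rewrite -expo_eq EFinM; apply: lee_wpmul2l; first by rewrite lee_fin expR_ge0.
apply: gr; apply: le_trans (expR_ge1Dx _); rewrite lerDl; exact: ler0n.
Qed.
End T.

Section G.
Variable R : realType.
Local Open Scope ereal_scope.

Lemma wmeas_ge0 n (w : pt R n -> R) E : (forall x, 0 <= w x)%R -> 0 <= wmeas w E.
Proof. by move=> w0; apply: integral_ge0 => x _; rewrite lee_fin. Qed.

Lemma wmeas_fin n (w : pt R n -> R) r : weight w -> wmeas w (B n r) \is a fin_num.
Proof.
case=> w0 [_ wf]; rewrite ge0_fin_numE; first exact: wf.
exact: wmeas_ge0.
Qed.

Lemma leb_fin n r : (0 < r)%R -> @leb R n (B n r) \is a fin_num.
Proof.
move=> r0; rewrite ge0_fin_numE; last exact: measure_ge0.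
exact: le_lt_trans (leb_B_ub n r r0) (ltry _).
Qed.

Lemma leb_lty n r : (0 < r)%R -> @leb R n (B n r) < +oo.
Proof. by move=> r0; exact: le_lt_trans (leb_B_ub n r r0) (ltry _). Qed.

Lemma growth_A1 n (w : pt R n -> R) : A1 w -> exists K : R, exists M : nat,
  (0 <= K)%R /\ forall r, (1 <= r)%R -> wmeas w (B n r) <= (K * r ^+ M)%:E.
Proof.
move=> [wt [C HC]]; have [w0 [mw _]] := wt.
set C' := Num.max C 0%R.
have C'0 : (0 <= C')%R by rewrite le_max lexx orbT.
set b1 := fine (@leb R n (B n 1)).
set W1 := fine (wmeas w (B n 1)).
have b10 : (0 < b1)%R by rewrite fine_gt0 // leb_B_gt0 ?leb_lty.
have W10 : (0 <= W1)%R by rewrite fine_ge0 // wmeas_ge0.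
exists (C' * W1 * 2 ^+ n / b1)%R, n; split.
  by apply: divr_ge0; [rewrite !mulr_ge0 // exprn_ge0 | exact: ltW].
move=> r r1; have r0 : (0 < r)%R by lra.
set bR := fine (@leb R n (B n r)).
set WR := fine (wmeas w (B n r)).
have bR0 : (0 < bR)%R by rewrite fine_gt0 // leb_B_gt0 ?leb_lty.
have bRle : (bR <= (2 * r) ^+ n)%R.
  by rewrite -lee_fin /bR fineK ?leb_fin ?leb_B_ub.
have WR0 : (0 <= WR)%R by rewrite fine_ge0 // wmeas_ge0.
set y := (bR^-1 * WR)%R.
have Hy : forall x, B n 1%R x -> y%:E <= maxfun w x.
  move=> x Bx; apply: ereal_sup_ubound; exists (zp R n), r; split => //; split.
    by change (B n r x); move: Bx; rewrite !Bnorm => h; lra.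
  by rewrite /y EFinM /WR fineK // wmeas_fin.
have ae1 : {ae @leb R n, forall x, B n 1%R x -> (cst y%:E) x <= (C'%:E * (w x)%:E)}.
  apply: filterS HC => x H Bx; apply: le_trans (Hy x Bx) (le_trans H _).
  by rewrite -!EFinM lee_fin ler_wpM2r // le_max lexx.
have I1 : \int[@leb R n]_(x in B n 1%R) (cst y%:E) x <=
          \int[@leb R n]_(x in B n 1%R) (C'%:E * (w x)%:E).
  apply: ae_ge0_le_integral => //.
  - exact: mB.
  - by move=> x _; rewrite /= lee_fin /y mulr_ge0 // invr_ge0 ltW.
  - by move=> x _; rewrite -EFinM lee_fin mulr_ge0.
  - by apply/measurable_EFinP; apply: measurable_funM => //; exact: measurable_funTS.
have E1 : \int[@leb R n]_(x in B n 1%R) (cst y%:E) x = (y * b1)%:E.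
  rewrite integral_cst; last exact: mB.
  rewrite (@EFinM R y b1) /b1 fineK; last exact: (leb_fin n 1%R ltr01).
  reflexivity.
have E2 : \int[@leb R n]_(x in B n 1%R) (C'%:E * (w x)%:E) = (C' * W1)%:E.
  rewrite ge0_integralZl_EFin //; last 3 first.
  - exact: mB.
  - by move=> x _; rewrite lee_fin.
  - by apply/measurable_EFinP; exact: measurable_funTS.
  rewrite (@EFinM R C' W1) /W1 fineK; last exact: (wmeas_fin n w 1%R wt).
  by [].
move: I1; rewrite E1 E2 lee_fin => H.
rewrite -(fineK (wmeas_fin n w r wt)) -/WR lee_fin.
rewrite mulrAC ler_pdivlMr //.
have e : (WR * b1 = bR * (y * b1))%R.
  by rewrite /y !mulrA mulfV ?gt_eqF // mul1r.
rewrite e; apply: le_trans (ler_wpM2l (ltW bR0) H) _.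
have := ler_wpM2r (mulr_ge0 C'0 W10) bRle; rewrite exprMn => h.
apply: le_trans h _; rewrite mulrC !mulrA lexx //.
Qed.
End G.

Section Q.
Variable R : realType.
Local Open Scope ereal_scope.

Lemma wneg_meas n q (w : pt R n -> R) : measurable_fun setT w ->
  measurable_fun setT (wneg q w).
Proof.
move=> mw; rewrite /wneg /=.
apply: measurable_fun_ifT.
- exact: measurable_fun_eqr.
- exact: measurable_cst.
- apply/measurable_EFinP; exact: measurableT_comp (measurable_powR _) mw.
Qed.

Lemma wneg_gt0 n q (w : pt R n -> R) x : 0 < wneg q w x.
Proof.
rewrite /wneg /=; case: ifPn => // wn0.
by rewrite lte_fin /powR (negbTE wn0) expR_gt0.
Qed.

Lemma s_pos n q (w : pt R n -> R) : measurable_fun setT w ->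
  0 < \int[@leb R n]_(x in B n 1%R) wneg q w x.
Proof.
move=> mw; rewrite lt0e integral_ge0 ?andbT; last by move=> x _; exact/ltW/wneg_gt0.
apply/negP => /eqP s0.
have mB1 := @mB R n 1%R ltr01.
have : \int[@leb R n]_(x in B n 1%R) `|wneg q w x| = 0.
  rewrite -s0; apply: eq_integral => x _; rewrite gee0_abs //; exact/ltW/wneg_gt0.
move/(ae_eq_integral_abs _ mB1 (measurable_funTS (wneg_meas _ q _ mw))).
case=> N [mN N0 sub].
have : @leb R n (B n 1%R) <= @leb R n N.
  apply: le_measure; rewrite ?inE //.
  move=> x Bx; apply: sub => /= h; have := h Bx; have := wneg_gt0 _ q w x.
  by move=> /[swap] ->; rewrite ltxx.
move=> h; have : @leb R n (B n 1%R) <= 0.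
  apply: (le_trans h); rewrite le_eqVlt; apply/orP; left; apply/eqP; exact: N0.
by rewrite leNgt leb_B_gt0.
Qed.
Lemma growth_Aq n (w : pt R n -> R) q : (1 < q)%R -> Aq q w ->
  exists K : R, exists M : nat,
  (0 <= K)%R /\ forall r, (1 <= r)%R -> wmeas w (B n r) <= (K * r ^+ M)%:E.
Proof.
move=> q1 [wt [C HC]]; have [w0 [mw _]] := wt.
set s := \int[@leb R n]_(x in B n 1%R) wneg q w x.
have s0 : 0 < s := s_pos _ q _ mw.
have wneg0 x : 0 <= wneg q w x by exact/ltW/wneg_gt0.
have sle r : (1 <= r)%R -> s <= \int[@leb R n]_(x in B n r) wneg q w x.
  move=> r1; rewrite /s (integral_mkcond (B n 1%R)) (integral_mkcond (B n r)).
  apply: my_le_integral.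
    by move=> x; rewrite /patch; case: ifPn.
  move=> x; rewrite /patch; case: ifPn => [/set_mem Bx|_]; last by case: ifPn.
  rewrite ifT //; apply/mem_set; move: Bx; rewrite !Bnorm => h; lra.
have key r : (1 <= r)%R -> (0 < fine (wmeas w (B n r)))%R ->
    exists2 sR : R, s <= sR%:E &
      (fine (@leb R n (B n r)) `^ (- q) * fine (wmeas w (B n r)) * sR `^ (q - 1) <= C)%R.
  move=> r1 WR0; have r0 : (0 < r)%R by lra.
  have H : poweR (@leb R n (B n r)) (- q) * wmeas w (B n r) *
      poweR (\int[@leb R n]_(x in B n r) wneg q w x) (q - 1) <= C%:E :=
    HC (zp R n) r r0.
  move: H (sle r r1).
  rewrite -(fineK (leb_fin R n r r0)) -(fineK (wmeas_fin R n w r wt)) poweR_EFin.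
  have : 0 <= \int[@leb R n]_(x in B n r) wneg q w x by apply: integral_ge0.
  case: (\int[@leb R n]_(x in B n r) wneg q w x) => [sR| |] // _.
    by rewrite poweR_EFin -!EFinM lee_fin => H sR1; exists sR.
  rewrite poweRyr; last by rewrite subr_eq0 gt_eqF.
  rewrite -EFinM gt0_muley; first by rewrite leNgt ltry.
  by rewrite lte_fin mulr_gt0 // powR_gt0 // fine_gt0 // leb_B_gt0 ?leb_lty.
have sge0 : 0 <= s by exact: ltW.
move: s0 sle key; case Es : s => [s'| |] // s0 sle key; last first.
  exists 0%R, 0%N; split => // r r1; rewrite mul0r.
  rewrite -(fineK (wmeas_fin R n w r wt)) lee_fin leNgt; apply/negP => WR0.
  by have [sR] := key r r1 WR0; rewrite leye_eq.
rewrite lte_fin in s0.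
set m := (Num.truncn q).+1.
have qm : (q <= m%:R)%R by exact/ltW/truncnS_gt.
set C' := Num.max C 0%R.
have C'0 : (0 <= C')%R by rewrite le_max lexx orbT.
have sq0 : (0 < s' `^ (q - 1))%R by exact: powR_gt0.
exists (C' * 2 ^+ (n * m) / s' `^ (q - 1))%R, (n * m)%N; split.
  by apply: divr_ge0; [rewrite mulr_ge0 // exprn_ge0 | exact: ltW].
move=> r r1; have r0 : (0 < r)%R by lra.
rewrite -(fineK (wmeas_fin R n w r wt)) lee_fin.
set WR := fine (wmeas w (B n r)).
have WR0 : (0 <= WR)%R by rewrite fine_ge0 // wmeas_ge0.
have K0 : (0 <= C' * 2 ^+ (n * m) / s' `^ (q - 1) * r ^+ (n * m))%R.
  apply: mulr_ge0; last exact: exprn_ge0 (ltW r0).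
  by apply: divr_ge0; [apply: mulr_ge0 => //; exact: exprn_ge0 | exact: ltW].
move: WR0; rewrite le_eqVlt => /predU1P[<-|WRpos]; first exact: K0.
have [sR sRle H] := key r r1 WRpos.
rewrite lee_fin in sRle.
set bR := fine (@leb R n (B n r)).
have bR0 : (0 < bR)%R by rewrite fine_gt0 // leb_B_gt0 ?leb_lty.
have bRle : (bR <= (2 * r) ^+ n)%R.
  by rewrite -lee_fin /bR fineK ?leb_fin ?leb_B_ub.
have bq0 : (0 < bR `^ q)%R by exact: powR_gt0.
rewrite -/bR -/WR powRN in H.
have h1 : (WR * sR `^ (q - 1) <= C * bR `^ q)%R.
  have := ler_wpM2l (ltW bq0) H; rewrite !mulrA mulfV ?gt_eqF // mul1r.
  by move=> h; rewrite [(C * _)%R]mulrC.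
have h2 : (s' `^ (q - 1) <= sR `^ (q - 1))%R.
  apply: ge0_ler_powR => //; first by rewrite subr_ge0 ltW.
  - by rewrite nnegrE ltW.
  - by rewrite nnegrE (le_trans (ltW s0)).
have r21 : (1 <= (2 * r) ^+ n)%R by rewrite exprn_ege1 //; lra.
have h3 : (bR `^ q <= 2 ^+ (n * m) * r ^+ (n * m))%R.
  have h3a : (bR `^ q <= ((2 * r) ^+ n) `^ q)%R.
    apply: ge0_ler_powR => //; first by rewrite ltW // (lt_trans ltr01).
    - by rewrite nnegrE ltW.
    - by rewrite nnegrE (le_trans ler01).
  have h3b : (((2 * r) ^+ n) `^ q <= ((2 * r) ^+ n) `^ m%:R)%R by exact: ler_powR.
  have h3c : (((2 * r) ^+ n) `^ m%:R = 2 ^+ (n * m) * r ^+ (n * m))%R.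
    by rewrite powR_mulrn ?(le_trans ler01) // -exprM exprMn.
  by rewrite -h3c; exact: le_trans h3a h3b.
rewrite mulrAC ler_pdivlMr //.
apply: (le_trans (ler_wpM2l (ltW WRpos) h2)).
apply: (le_trans h1).
have hC : (C * bR `^ q <= C' * bR `^ q)%R.
  by apply: ler_wpM2r; [exact: ltW | rewrite le_max lexx].
apply: (le_trans hC); rewrite -[X in (_ <= X)%R]mulrA.
exact: ler_wpM2l.
Qed.
End Q.

Section M.
Variable R : realType.
Local Open Scope ereal_scope.
Lemma growth n (w : pt R n -> R) : Ainf w -> exists K : R, exists M : nat,
  (0 <= K)%R /\ forall r, (1 <= r)%R -> wmeas w (B n r) <= (K * r ^+ M)%:E.
Proof.
case=> [A|[q [q1 A]]]; first exact: growth_A1.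
exact: (@growth_Aq R n w q q1 A).
Qed.
Lemma Ainf_weight n (w : pt R n -> R) : Ainf w -> weight w.
Proof. by case=> [[]|[q [_ []]]]. Qed.

Lemma main5p6 (n : nat) (Omega : set (pt R n))
    (w : pt R n -> R) (p : pt R n -> \bar R) (pinf : \bar R) :
  eopen Omega ->
  Ainf w ->
  measurable_fun Omega p ->
  (forall x, Omega x -> (1 <= p x)%E) ->
  (1 <= pinf)%E ->
  log_holder_decay Omega p pinf ->
  exists2 lam : R, (0 < lam < 1)%R &
    (\int[@leb R n]_(x in Omega)
        (lampow lam `|inv_ext (p x) - inv_ext pinf| * w x)%:E < +oo)%E.
Proof.
move=> _ Aw _ _ _ [c2 c20 Hc].
have [w0 [mw _]] := Ainf_weight _ _ Aw.
have [K [M [K0 gr]]] := growth _ _ Aw.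
set N : R := M.+1%:R.
have N0 : (0 < N)%R by rewrite ltr0n.
exists (expR (- (c2 * N))).
  by rewrite expR_gt0 expR_lt1 oppr_lt0 mulr_gt0.
apply: (@tail_bound _ _ _ _ _ w0 mw K0 gr).
  move=> x _; rewrite mulr_ge0 // /lampow; case: ifPn => _ //; exact: powR_ge0.
move=> x Ox.
set t := `|inv_ext (p x) - inv_ext pinf|%R.
have e0 : (0 <= Defs.enorm x)%R by exact: sqrtr_ge0.
set L := ln (expR 1 + Defs.enorm x).
have L1 : (1 <= L)%R.
  have pos : (0 < expR 1 + Defs.enorm x)%R by have := @expR_gt0 R 1%R; lra.
  by rewrite /L -{1}(@expRK R 1%R) ler_ln ?posrE ?expR_gt0 // lerDl.
have L0 : (0 < L)%R by lra.
have tL : (t <= c2 / L)%R := Hc x Ox.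
exists (Num.truncn L); split.
  apply: ler_wpM2r => //.
  rewrite /lampow; case: ifPn => [_|tn0]; first exact: expR_ge0.
  have t0 : (0 < t)%R by rewrite lt0r tn0 normr_ge0.
  rewrite -expRM ler_expR.
  have kL : ((Num.truncn L)%:R <= L)%R by rewrite truncn_le ltW.
  have u0 : (0 < t^-1)%R by rewrite invr_gt0.
  have tu : (t * t^-1 = 1)%R by rewrite mulfV // gt_eqF.
  have tL' : (t * L <= c2)%R by rewrite -ler_pdivlMr.
  have Lu : (L <= c2 * t^-1)%R.
    have := ler_wpM2r (ltW u0) tL'; rewrite mulrAC tu mul1r //.
  have : ((Num.truncn L)%:R <= c2 * t^-1)%R by exact: le_trans kL Lu.
  move=> h; have := ler_wpM2l (ltW N0) h; nra.
rewrite Bnorm.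
apply: lt_le_trans (_ : _ < expR L)%R _.
  by rewrite /L lnK; [have := @expR_gt0 R 1%R; lra | rewrite posrE; have := @expR_gt0 R 1%R; lra].
rewrite ler_expR; exact/ltW/truncnS_gt.
Qed.
End M.

Theorem lemma5p6 (R : realType) (n : nat) (Omega : set (pt R n))
    (w : pt R n -> R) (p : pt R n -> \bar R) (pinf : \bar R) :
  eopen Omega ->
  Ainf w ->
  measurable_fun Omega p ->
  (forall x, Omega x -> (1 <= p x)%E) ->
  (1 <= pinf)%E ->
  log_holder_decay Omega p pinf ->
  exists2 lam : R, 0 < lam < 1 &
    (\int[@leb R n]_(x in Omega)
        (lampow lam `|inv_ext (p x) - inv_ext pinf| * w x)%:E < +oo)%E.
Proof.
exact: main5p6.
Qed.
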